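(* Let $(A,\succ_A,\prec_A)$ be an anti-pre-Leibniz algebra with sub-adjacent Leibniz algebra $(A,\circ_A)$. Define multiplications on $A\oplus A^*$ by $$(x+a^* )\circ_{1}(y+b^* )=x\circ_A y-\mathcal L^*_{\succ_A}(x)b^*+(\mathcal L^*_{\succ_A}+\mathcal R^*_{\prec_A})(y)a^*,$$ $$(x+a^* )\circ_{2}(y+b^* )=x\circ_A y+\mathcal L^*_{\circ_A}(x)b^*-(\mathcal L^*_{\circ_A}+\mathcal R^*_{\circ_A})(y)a^*,$$ for $x,y\in A$, $a^*,b^*\in A^*$. Then $(A\oplus A^*,\circ_1,\circ_2)$ is a compatible Leibniz algebra if and only if $(A,\succ_A,\prec_A)$ is an admissible Novikov dialgebra.
   Context: All vector spaces are finite-dimensional over a field $\mathbb K$ of characteristic zero. For a multiplication $\ast$, $\mathcal L_\ast(x)y=x\ast y$, $\mathcal R_\ast(x)y=y\ast x$; for $f:A\to\mathrm{End}(V)$, $f^*:A\to\mathrm{End}(V^* )$ is $\langle f^*(x)u^*,v\rangle=-\langle u^*,f(x)v\rangle$. A Leibniz algebra is a vector space with multiplication $\circ$ satisfying $x\circ(y\circ z)=(x\circ y)\circ z+y\circ(x\circ z)$. A compatible Leibniz algebra is $(B,\circ_1,\circ_2)$ with both $(B,\circ_1),(B,\circ_2)$ Leibniz algebras and, for all $x,y,z$: $x\circ_2(y\circ_1 z)+x\circ_1(y\circ_2 z)-(x\circ_1 y)\circ_2 z-(x\circ_2 y)\circ_1 z-y\circ_2(x\circ_1 z)-y\circ_1(x\circ_2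 z)=0$. For multiplications $\succ_A,\prec_A$ set $x\circ_A y=x\succ_A y+x\prec_A y$. Identities for all $x,y,z$: (AL1) $(x\circ_A y)\prec_A z=x\succ_A(y\circ_A z)-y\succ_A(x\circ_A z)$; (AL2) $(x\circ_A y)\succ_A z=y\succ_A(x\succ_A z)-x\succ_A(y\succ_A z)$; (AL3) $x\prec_A(y\circ_A z)=(y\succ_A x)\prec_A z-y\succ_A(x\prec_A z)$; (AL4) $(x\succ_A y)\prec_A z=-(y\prec_A x)\prec_A z$; (AN1) $(x\succ_A y)\succ_A z=-(y\prec_A x)\succ_A z$; (AN2) $x\prec_A(y\prec_A z)-y\prec_A(x\prec_A z)=2(x\prec_A y)\prec_A z-2(y\prec_A x)\prec_A z$; (AN3) $(x\succ_A y)\succ_A z+y\prec_A(x\succ_A z)=2x\succ_A(y\circ_A z)$. An anti-pre-Leibniz algebra satisfies (AL1)–(AL4), and its sub-adjacent Leibniz algebra is $(A,\circ_A)$; an admissible Novikov dialgebra satisfies (AL2)–(AL4) and (AN1)–(AN3). *)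

(* Defs.v *)
From HB Require Import structures.
From mathcomp Require Import all_boot all_order all_algebra.
Set Implicit Arguments. Unset Strict Implicit. Unset Printing Implicit Defensive.
Import GRing.Theory.
Local Open Scope ring_scope.

Section AntiPreLeibniz.
Variables (K : fieldType) (A : vectType K).

Definition bilinear_mul (m : A -> A -> A) : Prop :=
  (forall x, linear (m x)) /\ (forall y, linear (fun x => m x y)).

Definition circA (succ prec : A -> A -> A) (x y : A) : A := succ x y + prec x y.

Definition AL1 (succ prec : A -> A -> A) : Prop := forall x y z,
  prec (circA succ prec x y) z = succ x (circA succ prec y z) - succ y (circA succ prec x z).
Definition AL2 (succ prec : A -> A -> A) : Prop := forall x y z,
  succ (circA succ prec x y) z = succ y (succ x z) - succ x (succ y z).
Definition AL3 (succ prec : A -> A -> A) : Prop := forall x y z,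
  prec x (circA succ prec y z) = prec (succ y x) z - succ y (prec x z).
Definition AL4 (succ prec : A -> A -> A) : Prop := forall x y z,
  prec (succ x y) z = - prec (prec y x) z.
Definition AN1 (succ prec : A -> A -> A) : Prop := forall x y z,
  succ (succ x y) z = - succ (prec y x) z.
Definition AN2 (succ prec : A -> A -> A) : Prop := forall x y z,
  prec x (prec y z) - prec y (prec x z) = 2%:R *: prec (prec x y) z - 2%:R *: prec (prec y x) z.
Definition AN3 (succ prec : A -> A -> A) : Prop := forall x y z,
  succ (succ x y) z + prec y (succ x z) = 2%:R *: succ x (circA succ prec y z).

Definition anti_pre_Leibniz (succ prec : A -> A -> A) : Prop :=
  bilinear_mul succ /\ bilinear_mul prec /\
  [/\ AL1 succ prec, AL2 succ prec, AL3 succ prec & AL4 succ prec].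

Definition admissible_Novikov_dialgebra (succ prec : A -> A -> A) : Prop :=
  bilinear_mul succ /\ bilinear_mul prec /\
  [/\ AL2 succ prec, AL3 succ prec & AL4 succ prec] /\
  [/\ AN1 succ prec, AN2 succ prec & AN3 succ prec].

(* The space A (+) A^*: pairs (x, a) with a a linear functional A -> K.
   We use the carrier A * (A -> K) and restrict all quantifications to
   pairs whose second component is linear (in_dbl). *)
Definition dbl := (A * (A -> K))%type.
Definition in_dbl (X : dbl) : Prop := scalar X.2.
Definition dzero : dbl := (0, fun _ => 0).
Definition dadd (X Y : dbl) : dbl := (X.1 + Y.1, fun v => X.2 v + Y.2 v).
Definition dopp (X : dbl) : dbl := (- X.1, fun v => - X.2 v).

(* Dual maps: for f : A -> End(A) given by f x = (v |-> m x v) (left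
   multiplication L_m) resp. (v |-> m v x) (right multiplication R_m),
   <f^*(x) a, v> = - <a, f(x) v>. *)
Definition dualL (m : A -> A -> A) (x : A) (a : A -> K) : A -> K :=
  fun v => - a (m x v).
Definition dualR (m : A -> A -> A) (y : A) (a : A -> K) : A -> K :=
  fun v => - a (m v y).

Definition circ1 (succ prec : A -> A -> A) (X Y : dbl) : dbl :=
  (circA succ prec X.1 Y.1,
   fun v => - dualL succ X.1 Y.2 v + (dualL succ Y.1 X.2 v + dualR prec Y.1 X.2 v)).

Definition circ2 (succ prec : A -> A -> A) (X Y : dbl) : dbl :=
  (circA succ prec X.1 Y.1,
   fun v => dualL (circA succ prec) X.1 Y.2 v
            - (dualL (circA succ prec) Y.1 X.2 v + dualR (circA succ prec) Y.1 X.2 v)).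

Definition dbl_Leibniz (m : dbl -> dbl -> dbl) : Prop :=
  forall X Y Z, in_dbl X -> in_dbl Y -> in_dbl Z ->
    m X (m Y Z) = dadd (m (m X Y) Z) (m Y (m X Z)).

Definition dbl_compatible_Leibniz (m1 m2 : dbl -> dbl -> dbl) : Prop :=
  [/\ dbl_Leibniz m1, dbl_Leibniz m2 &
    forall X Y Z, in_dbl X -> in_dbl Y -> in_dbl Z ->
      dadd (dadd (dadd (dadd (dadd (m2 X (m1 Y Z)) (m1 X (m2 Y Z)))
                              (dopp (m2 (m1 X Y) Z)))
                        (dopp (m1 (m2 X Y) Z)))
                  (dopp (m2 Y (m1 X Z))))
           (dopp (m1 Y (m2 X Z))) = dzero].

End AntiPreLeibniz.

(* Main.v *)
Require Import Defs.
From HB Require Import structures.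
From mathcomp Require Import all_boot all_order all_algebra.
From mathcomp Require Import ring.
From Stdlib Require Import FunctionalExtensionality.
Import GRing.Theory.
Set Implicit Arguments. Unset Strict Implicit.
Local Open Scope ring_scope.

Section Aux.
Variable K : fieldType.

Lemma linD (U V : lmodType K) (f : U -> V) : linear f -> forall u w, f (u + w) = f u + f w.
Proof. by move=> hf u w; rewrite -[u in LHS]scale1r hf scale1r. Qed.
Lemma lin0 (U V : lmodType K) (f : U -> V) : linear f -> f 0 = 0.
Proof. move=> hf; apply: (@addrI _ (f 0)); by rewrite -linD // !addr0. Qed.
Lemma linZ (U V : lmodType K) (f : U -> V) : linear f -> forall a u, f (a *: u) = a *: f u.
Proof. by move=> hf a u; rewrite -[a *: u]addr0 hf lin0 // addr0. Qed.
Lemma linN (U V : lmodType K) (f : U -> V) : linear f -> forall u, f (- u) = - f u.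
Proof. by move=> hf u; rewrite -scaleN1r linZ // scaleN1r. Qed.

Lemma scD (U : lmodType K) (f : U -> K) : scalar f -> forall u w, f (u + w) = f u + f w.
Proof. by move=> hf u w; rewrite -[u in LHS]scale1r hf mul1r. Qed.
Lemma sc0 (U : lmodType K) (f : U -> K) : scalar f -> f 0 = 0.
Proof. move=> hf; apply: (@addrI _ (f 0)); by rewrite -scD // !addr0. Qed.
Lemma scZ (U : lmodType K) (f : U -> K) : scalar f -> forall a u, f (a *: u) = a * f u.
Proof. by move=> hf a u; rewrite -[a *: u]addr0 hf sc0 // addr0. Qed.
Lemma scN (U : lmodType K) (f : U -> K) : scalar f -> forall u, f (- u) = - f u.
Proof. by move=> hf u; rewrite -scaleN1r scZ // mulN1r. Qed.
Lemma scalar0 (U : lmodType K) : scalar (fun _ : U => (0:K)).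
Proof. by move=> a u v; rewrite mulr0 addr0. Qed.

Lemma sep (A : vectType K) (u w : A) : (forall c : A -> K, scalar c -> c u = c w) -> u = w.
Proof.
move=> h; apply/eqP; rewrite -subr_eq0; apply/eqP.
have hu : u - w \in fullv by rewrite memvf.
rewrite (coord_vbasis hu) big1 // => i _.
have hc : scalar (coord (vbasis fullv) i : A -> K) by exact: linearP.
by rewrite (scD hc) (scN hc) (h _ hc) subrr scale0r.
Qed.

Lemma comb (k l r l' r' : K) : l = r -> l' = r' -> l + k * l' = r + k * r'.
Proof. by move=> -> ->. Qed.
Lemma fin (g1 g2 l r : K) : l = r -> g1 - g2 = l - r -> g1 = g2.
Proof. by move=> -> /eqP; rewrite subrr subr_eq0 => /eqP. Qed.
End Aux.

Section Main.
Variables (K : fieldType) (A : vectType K) (s p : A -> A -> A).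
Hypotheses (sl : forall x, linear (s x)) (sr : forall y, linear (fun x => s x y))
  (pl : forall x, linear (p x)) (pr : forall y, linear (fun x => p x y)).
Lemma sDr x u w : s x (u + w) = s x u + s x w. Proof. exact: (@linD K A A (s x) (sl x)). Qed.
Lemma sDl y u w : s (u + w) y = s u y + s w y. Proof. exact: (@linD K A A (fun x => s x y) (sr y)). Qed.
Lemma pDr x u w : p x (u + w) = p x u + p x w. Proof. exact: (@linD K A A (p x) (pl x)). Qed.
Lemma pDl y u w : p (u + w) y = p u y + p w y. Proof. exact: (@linD K A A (fun x => p x y) (pr y)). Qed.
Hypotheses (hAL1 : AL1 s p) (hAL2 : AL2 s p) (hAL3 : AL3 s p) (hAL4 : AL4 s p).

Lemma leibA x y z : circA s p x (circA s p y z) = circA s p (circA s p x y) z + circA s p y (circA s p x z).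
Proof.
apply: sep => c hc.
have e1 := congr1 c (hAL1 (x) (y) (z)).
rewrite /circA ?(sDl, sDr, pDl, pDr) ?(scD hc, scN hc, scZ hc) in e1.
have e2 := congr1 c (hAL1 (y) (x) (z)).
rewrite /circA ?(sDl, sDr, pDl, pDr) ?(scD hc, scN hc, scZ hc) in e2.
have e3 := congr1 c (hAL2 (x) (y) (z)).
rewrite /circA ?(sDl, sDr, pDl, pDr) ?(scD hc, scN hc, scZ hc) in e3.
have e4 := congr1 c (hAL3 (x) (y) (z)).
rewrite /circA ?(sDl, sDr, pDl, pDr) ?(scD hc, scN hc, scZ hc) in e4.
have e5 := congr1 c (hAL3 (y) (x) (z)).
rewrite /circA ?(sDl, sDr, pDl, pDr) ?(scD hc, scN hc, scZ hc) in e5.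
have e6 := congr1 c (hAL4 (x) (y) (z)).
rewrite /circA ?(sDl, sDr, pDl, pDr) ?(scD hc, scN hc, scZ hc) in e6.
rewrite /circA ?(sDl, sDr, pDl, pDr) ?(scD hc, scN hc, scZ hc).
apply: (fin (comb (-(1%:R)) (comb (-(1%:R)) (comb (1%:R) (comb (-(1%:R)) (comb (1%:R) (comb (-(1%:R)) (erefl (0:K)) e1) e2) e3) e4) e5) e6)); ring.
Qed.

Lemma leib1 (X Y Z : dbl A) : in_dbl X -> in_dbl Y -> in_dbl Z ->
  circ1 s p X (circ1 s p Y Z) = dadd (circ1 s p (circ1 s p X Y) Z) (circ1 s p Y (circ1 s p X Z)).
Proof.
case: X => x a; case: Y => y b; case: Z => z c; rewrite /in_dbl /= => ha hb hc.
rewrite /circ1 /circ2 /dadd /dopp /dzero /=; congr (_, _).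
  exact: leibA.
apply: functional_extensionality => v; rewrite /dualL /dualR /=.
have e7 := congr1 a (hAL2 (y) (z) (v)).
rewrite /circA ?(sDl, sDr, pDl, pDr) ?(scD ha, scN ha, scZ ha, scD hb, scN hb, scZ hb, scD hc, scN hc, scZ hc) in e7.
have e8 := congr1 a (hAL3 (v) (y) (z)).
rewrite /circA ?(sDl, sDr, pDl, pDr) ?(scD ha, scN ha, scZ ha, scD hb, scN hb, scZ hb, scD hc, scN hc, scZ hc) in e8.
have e9 := congr1 a (hAL4 (z) (v) (y)).
rewrite /circA ?(sDl, sDr, pDl, pDr) ?(scD ha, scN ha, scZ ha, scD hb, scN hb, scZ hb, scD hc, scN hc, scZ hc) in e9.
have e10 := congr1 b (hAL2 (x) (z) (v)).
rewrite /circA ?(sDl, sDr, pDl, pDr) ?(scD ha, scN ha, scZ ha, scD hb, scN hb, scZ hb, scD hc, scN hc, scZ hc) in e10.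
have e11 := congr1 b (hAL3 (v) (x) (z)).
rewrite /circA ?(sDl, sDr, pDl, pDr) ?(scD ha, scN ha, scZ ha, scD hb, scN hb, scZ hb, scD hc, scN hc, scZ hc) in e11.
have e12 := congr1 c (hAL2 (x) (y) (v)).
rewrite /circA ?(sDl, sDr, pDl, pDr) ?(scD ha, scN ha, scZ ha, scD hb, scN hb, scZ hb, scD hc, scN hc, scZ hc) in e12.
rewrite /circA ?(sDl, sDr, pDl, pDr) ?(scD ha, scN ha, scZ ha, scD hb, scN hb, scZ hb, scD hc, scN hc, scZ hc).
apply: (fin (comb (-(1%:R)) (comb (1%:R) (comb (1%:R) (comb (-(1%:R)) (comb (-(1%:R)) (comb (-(1%:R)) (erefl (0:K)) e7) e8) e9) e10) e11) e12)); ring.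
Qed.

Lemma leib2 (X Y Z : dbl A) : in_dbl X -> in_dbl Y -> in_dbl Z ->
  circ2 s p X (circ2 s p Y Z) = dadd (circ2 s p (circ2 s p X Y) Z) (circ2 s p Y (circ2 s p X Z)).
Proof.
case: X => x a; case: Y => y b; case: Z => z c; rewrite /in_dbl /= => ha hb hc.
rewrite /circ1 /circ2 /dadd /dopp /dzero /=; congr (_, _).
  exact: leibA.
apply: functional_extensionality => v; rewrite /dualL /dualR /=.
have e13 := congr1 a (hAL1 (y) (z) (v)).
rewrite /circA ?(sDl, sDr, pDl, pDr) ?(scD ha, scN ha, scZ ha, scD hb, scN hb, scZ hb, scD hc, scN hc, scZ hc) in e13.
have e14 := congr1 a (hAL1 (y) (v) (z)).
rewrite /circA ?(sDl, sDr, pDl, pDr) ?(scD ha, scN ha, scZ ha, scD hb, scN hb, scZ hb, scD hc, scN hc, scZ hc) in e14.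
have e15 := congr1 a (hAL1 (z) (y) (v)).
rewrite /circA ?(sDl, sDr, pDl, pDr) ?(scD ha, scN ha, scZ ha, scD hb, scN hb, scZ hb, scD hc, scN hc, scZ hc) in e15.
have e16 := congr1 a (hAL1 (z) (v) (y)).
rewrite /circA ?(sDl, sDr, pDl, pDr) ?(scD ha, scN ha, scZ ha, scD hb, scN hb, scZ hb, scD hc, scN hc, scZ hc) in e16.
have e17 := congr1 a (hAL1 (v) (y) (z)).
rewrite /circA ?(sDl, sDr, pDl, pDr) ?(scD ha, scN ha, scZ ha, scD hb, scN hb, scZ hb, scD hc, scN hc, scZ hc) in e17.
have e18 := congr1 a (hAL1 (v) (z) (y)).
rewrite /circA ?(sDl, sDr, pDl, pDr) ?(scD ha, scN ha, scZ ha, scD hb, scN hb, scZ hb, scD hc, scN hc, scZ hc) in e18.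
have e19 := congr1 a (hAL2 (y) (z) (v)).
rewrite /circA ?(sDl, sDr, pDl, pDr) ?(scD ha, scN ha, scZ ha, scD hb, scN hb, scZ hb, scD hc, scN hc, scZ hc) in e19.
have e20 := congr1 a (hAL2 (y) (v) (z)).
rewrite /circA ?(sDl, sDr, pDl, pDr) ?(scD ha, scN ha, scZ ha, scD hb, scN hb, scZ hb, scD hc, scN hc, scZ hc) in e20.
have e21 := congr1 a (hAL2 (z) (v) (y)).
rewrite /circA ?(sDl, sDr, pDl, pDr) ?(scD ha, scN ha, scZ ha, scD hb, scN hb, scZ hb, scD hc, scN hc, scZ hc) in e21.
have e22 := congr1 a (hAL2 (v) (z) (y)).
rewrite /circA ?(sDl, sDr, pDl, pDr) ?(scD ha, scN ha, scZ ha, scD hb, scN hb, scZ hb, scD hc, scN hc, scZ hc) in e22.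
have e23 := congr1 a (hAL3 (y) (z) (v)).
rewrite /circA ?(sDl, sDr, pDl, pDr) ?(scD ha, scN ha, scZ ha, scD hb, scN hb, scZ hb, scD hc, scN hc, scZ hc) in e23.
have e24 := congr1 a (hAL3 (y) (v) (z)).
rewrite /circA ?(sDl, sDr, pDl, pDr) ?(scD ha, scN ha, scZ ha, scD hb, scN hb, scZ hb, scD hc, scN hc, scZ hc) in e24.
have e25 := congr1 a (hAL3 (z) (y) (v)).
rewrite /circA ?(sDl, sDr, pDl, pDr) ?(scD ha, scN ha, scZ ha, scD hb, scN hb, scZ hb, scD hc, scN hc, scZ hc) in e25.
have e26 := congr1 a (hAL3 (v) (y) (z)).
rewrite /circA ?(sDl, sDr, pDl, pDr) ?(scD ha, scN ha, scZ ha, scD hb, scN hb, scZ hb, scD hc, scN hc, scZ hc) in e26.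
have e27 := congr1 a (hAL4 (y) (z) (v)).
rewrite /circA ?(sDl, sDr, pDl, pDr) ?(scD ha, scN ha, scZ ha, scD hb, scN hb, scZ hb, scD hc, scN hc, scZ hc) in e27.
have e28 := congr1 a (hAL4 (y) (v) (z)).
rewrite /circA ?(sDl, sDr, pDl, pDr) ?(scD ha, scN ha, scZ ha, scD hb, scN hb, scZ hb, scD hc, scN hc, scZ hc) in e28.
have e29 := congr1 b (hAL1 (x) (z) (v)).
rewrite /circA ?(sDl, sDr, pDl, pDr) ?(scD ha, scN ha, scZ ha, scD hb, scN hb, scZ hb, scD hc, scN hc, scZ hc) in e29.
have e30 := congr1 b (hAL1 (x) (v) (z)).
rewrite /circA ?(sDl, sDr, pDl, pDr) ?(scD ha, scN ha, scZ ha, scD hb, scN hb, scZ hb, scD hc, scN hc, scZ hc) in e30.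
have e31 := congr1 b (hAL1 (z) (x) (v)).
rewrite /circA ?(sDl, sDr, pDl, pDr) ?(scD ha, scN ha, scZ ha, scD hb, scN hb, scZ hb, scD hc, scN hc, scZ hc) in e31.
have e32 := congr1 b (hAL1 (v) (x) (z)).
rewrite /circA ?(sDl, sDr, pDl, pDr) ?(scD ha, scN ha, scZ ha, scD hb, scN hb, scZ hb, scD hc, scN hc, scZ hc) in e32.
have e33 := congr1 b (hAL2 (x) (z) (v)).
rewrite /circA ?(sDl, sDr, pDl, pDr) ?(scD ha, scN ha, scZ ha, scD hb, scN hb, scZ hb, scD hc, scN hc, scZ hc) in e33.
have e34 := congr1 b (hAL2 (x) (v) (z)).
rewrite /circA ?(sDl, sDr, pDl, pDr) ?(scD ha, scN ha, scZ ha, scD hb, scN hb, scZ hb, scD hc, scN hc, scZ hc) in e34.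
have e35 := congr1 b (hAL3 (x) (z) (v)).
rewrite /circA ?(sDl, sDr, pDl, pDr) ?(scD ha, scN ha, scZ ha, scD hb, scN hb, scZ hb, scD hc, scN hc, scZ hc) in e35.
have e36 := congr1 b (hAL3 (x) (v) (z)).
rewrite /circA ?(sDl, sDr, pDl, pDr) ?(scD ha, scN ha, scZ ha, scD hb, scN hb, scZ hb, scD hc, scN hc, scZ hc) in e36.
have e37 := congr1 b (hAL3 (z) (x) (v)).
rewrite /circA ?(sDl, sDr, pDl, pDr) ?(scD ha, scN ha, scZ ha, scD hb, scN hb, scZ hb, scD hc, scN hc, scZ hc) in e37.
have e38 := congr1 b (hAL3 (v) (x) (z)).
rewrite /circA ?(sDl, sDr, pDl, pDr) ?(scD ha, scN ha, scZ ha, scD hb, scN hb, scZ hb, scD hc, scN hc, scZ hc) in e38.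
have e39 := congr1 b (hAL4 (x) (z) (v)).
rewrite /circA ?(sDl, sDr, pDl, pDr) ?(scD ha, scN ha, scZ ha, scD hb, scN hb, scZ hb, scD hc, scN hc, scZ hc) in e39.
have e40 := congr1 b (hAL4 (x) (v) (z)).
rewrite /circA ?(sDl, sDr, pDl, pDr) ?(scD ha, scN ha, scZ ha, scD hb, scN hb, scZ hb, scD hc, scN hc, scZ hc) in e40.
have e41 := congr1 c (hAL1 (x) (y) (v)).
rewrite /circA ?(sDl, sDr, pDl, pDr) ?(scD ha, scN ha, scZ ha, scD hb, scN hb, scZ hb, scD hc, scN hc, scZ hc) in e41.
have e42 := congr1 c (hAL1 (y) (x) (v)).
rewrite /circA ?(sDl, sDr, pDl, pDr) ?(scD ha, scN ha, scZ ha, scD hb, scN hb, scZ hb, scD hc, scN hc, scZ hc) in e42.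
have e43 := congr1 c (hAL2 (x) (y) (v)).
rewrite /circA ?(sDl, sDr, pDl, pDr) ?(scD ha, scN ha, scZ ha, scD hb, scN hb, scZ hb, scD hc, scN hc, scZ hc) in e43.
have e44 := congr1 c (hAL3 (x) (y) (v)).
rewrite /circA ?(sDl, sDr, pDl, pDr) ?(scD ha, scN ha, scZ ha, scD hb, scN hb, scZ hb, scD hc, scN hc, scZ hc) in e44.
have e45 := congr1 c (hAL3 (y) (x) (v)).
rewrite /circA ?(sDl, sDr, pDl, pDr) ?(scD ha, scN ha, scZ ha, scD hb, scN hb, scZ hb, scD hc, scN hc, scZ hc) in e45.
have e46 := congr1 c (hAL4 (x) (y) (v)).
rewrite /circA ?(sDl, sDr, pDl, pDr) ?(scD ha, scN ha, scZ ha, scD hb, scN hb, scZ hb, scD hc, scN hc, scZ hc) in e46.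
rewrite /circA ?(sDl, sDr, pDl, pDr) ?(scD ha, scN ha, scZ ha, scD hb, scN hb, scZ hb, scD hc, scN hc, scZ hc).
apply: (fin (comb (1%:R) (comb (1%:R) (comb (-(1%:R)) (comb (1%:R) (comb (-(1%:R)) (comb (1%:R) (comb (-(1%:R)) (comb (-(1%:R)) (comb (-(1%:R)) (comb (-(1%:R)) (comb (1%:R) (comb (1%:R) (comb (-(1%:R)) (comb (-(1%:R)) (comb (1%:R) (comb (1%:R) (comb (-(1%:R)) (comb (-(1%:R)) (comb (1%:R) (comb (1%:R) (comb (1%:R) (comb (1%:R) (comb (-(1%:R)) (comb (-(1%:R)) (comb (-(1%:R)) (comb (-(1%:R)) (comb (1%:R) (comb (1%:R) (comb (-(1%:R)) (comb (-(1%:R)) (comb (-(1%:R)) (comb (-(1%:R)) (comb (1%:R) (comb (1%:R) (erefl (0:K)) e13) e14) e15) e16) e17) e18) e19) e20) e21) e22) e23) e24) e25) e26) e27) e28) e29) e30) e31) e32) e33) e34) e35) e36) e37) e38) e39) e40) e41) e42) e43) e44) e45) e46)); ring.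
Qed.

Section Back.
Hypotheses (hAN1 : AN1 s p) (hAN2 : AN2 s p) (hAN3 : AN3 s p).
Lemma compat (X Y Z : dbl A) : in_dbl X -> in_dbl Y -> in_dbl Z ->
      dadd (dadd (dadd (dadd (dadd (circ2 s p X (circ1 s p Y Z)) (circ1 s p X (circ2 s p Y Z)))
                              (dopp (circ2 s p (circ1 s p X Y) Z)))
                        (dopp (circ1 s p (circ2 s p X Y) Z)))
                  (dopp (circ2 s p Y (circ1 s p X Z))))
           (dopp (circ1 s p Y (circ2 s p X Z))) = dzero A.
Proof.
case: X => x a; case: Y => y b; case: Z => z c; rewrite /in_dbl /= => ha hb hc.
rewrite /circ1 /circ2 /dadd /dopp /dzero /=; congr (_, _).
  apply: sep => c0 hc0.
  rewrite (sc0 hc0).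
have e47 := congr1 c0 (hAL1 (x) (y) (z)).
rewrite /circA ?(sDl, sDr, pDl, pDr) ?(scD hc0, scN hc0, scZ hc0) in e47.
have e48 := congr1 c0 (hAL1 (y) (x) (z)).
rewrite /circA ?(sDl, sDr, pDl, pDr) ?(scD hc0, scN hc0, scZ hc0) in e48.
have e49 := congr1 c0 (hAL2 (x) (y) (z)).
rewrite /circA ?(sDl, sDr, pDl, pDr) ?(scD hc0, scN hc0, scZ hc0) in e49.
have e50 := congr1 c0 (hAL3 (x) (y) (z)).
rewrite /circA ?(sDl, sDr, pDl, pDr) ?(scD hc0, scN hc0, scZ hc0) in e50.
have e51 := congr1 c0 (hAL3 (y) (x) (z)).
rewrite /circA ?(sDl, sDr, pDl, pDr) ?(scD hc0, scN hc0, scZ hc0) in e51.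
have e52 := congr1 c0 (hAL4 (x) (y) (z)).
rewrite /circA ?(sDl, sDr, pDl, pDr) ?(scD hc0, scN hc0, scZ hc0) in e52.
rewrite /circA ?(sDl, sDr, pDl, pDr) ?(scD hc0, scN hc0, scZ hc0).
apply: (fin (comb (-(2%:R)) (comb (-(2%:R)) (comb (2%:R) (comb (-(2%:R)) (comb (2%:R) (comb (-(2%:R)) (erefl (0:K)) e47) e48) e49) e50) e51) e52)); ring.
apply: functional_extensionality => v; rewrite /dualL /dualR /=.
have e53 := congr1 a (hAL1 (y) (z) (v)).
rewrite /circA ?(sDl, sDr, pDl, pDr) ?(scD ha, scN ha, scZ ha, scD hb, scN hb, scZ hb, scD hc, scN hc, scZ hc) in e53.
have e54 := congr1 a (hAL1 (y) (v) (z)).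
rewrite /circA ?(sDl, sDr, pDl, pDr) ?(scD ha, scN ha, scZ ha, scD hb, scN hb, scZ hb, scD hc, scN hc, scZ hc) in e54.
have e55 := congr1 a (hAL1 (z) (y) (v)).
rewrite /circA ?(sDl, sDr, pDl, pDr) ?(scD ha, scN ha, scZ ha, scD hb, scN hb, scZ hb, scD hc, scN hc, scZ hc) in e55.
have e56 := congr1 a (hAL1 (z) (v) (y)).
rewrite /circA ?(sDl, sDr, pDl, pDr) ?(scD ha, scN ha, scZ ha, scD hb, scN hb, scZ hb, scD hc, scN hc, scZ hc) in e56.
have e57 := congr1 a (hAL1 (v) (z) (y)).
rewrite /circA ?(sDl, sDr, pDl, pDr) ?(scD ha, scN ha, scZ ha, scD hb, scN hb, scZ hb, scD hc, scN hc, scZ hc) in e57.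
have e58 := congr1 a (hAL3 (y) (z) (v)).
rewrite /circA ?(sDl, sDr, pDl, pDr) ?(scD ha, scN ha, scZ ha, scD hb, scN hb, scZ hb, scD hc, scN hc, scZ hc) in e58.
have e59 := congr1 a (hAL3 (z) (y) (v)).
rewrite /circA ?(sDl, sDr, pDl, pDr) ?(scD ha, scN ha, scZ ha, scD hb, scN hb, scZ hb, scD hc, scN hc, scZ hc) in e59.
have e60 := congr1 a (hAL3 (v) (y) (z)).
rewrite /circA ?(sDl, sDr, pDl, pDr) ?(scD ha, scN ha, scZ ha, scD hb, scN hb, scZ hb, scD hc, scN hc, scZ hc) in e60.
have e61 := congr1 a (hAL4 (y) (z) (v)).
rewrite /circA ?(sDl, sDr, pDl, pDr) ?(scD ha, scN ha, scZ ha, scD hb, scN hb, scZ hb, scD hc, scN hc, scZ hc) in e61.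
have e62 := congr1 a (hAL4 (y) (v) (z)).
rewrite /circA ?(sDl, sDr, pDl, pDr) ?(scD ha, scN ha, scZ ha, scD hb, scN hb, scZ hb, scD hc, scN hc, scZ hc) in e62.
have e63 := congr1 a (hAL4 (z) (v) (y)).
rewrite /circA ?(sDl, sDr, pDl, pDr) ?(scD ha, scN ha, scZ ha, scD hb, scN hb, scZ hb, scD hc, scN hc, scZ hc) in e63.
have e64 := congr1 a (hAN1 (z) (v) (y)).
rewrite /circA ?(sDl, sDr, pDl, pDr) ?(scD ha, scN ha, scZ ha, scD hb, scN hb, scZ hb, scD hc, scN hc, scZ hc) in e64.
have e65 := congr1 a (hAN2 (y) (z) (v)).
rewrite /circA ?(sDl, sDr, pDl, pDr) ?(scD ha, scN ha, scZ ha, scD hb, scN hb, scZ hb, scD hc, scN hc, scZ hc) in e65.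
have e66 := congr1 a (hAN2 (y) (v) (z)).
rewrite /circA ?(sDl, sDr, pDl, pDr) ?(scD ha, scN ha, scZ ha, scD hb, scN hb, scZ hb, scD hc, scN hc, scZ hc) in e66.
have e67 := congr1 a (hAN3 (y) (v) (z)).
rewrite /circA ?(sDl, sDr, pDl, pDr) ?(scD ha, scN ha, scZ ha, scD hb, scN hb, scZ hb, scD hc, scN hc, scZ hc) in e67.
have e68 := congr1 b (hAL1 (x) (z) (v)).
rewrite /circA ?(sDl, sDr, pDl, pDr) ?(scD ha, scN ha, scZ ha, scD hb, scN hb, scZ hb, scD hc, scN hc, scZ hc) in e68.
have e69 := congr1 b (hAL1 (x) (v) (z)).
rewrite /circA ?(sDl, sDr, pDl, pDr) ?(scD ha, scN ha, scZ ha, scD hb, scN hb, scZ hb, scD hc, scN hc, scZ hc) in e69.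
have e70 := congr1 b (hAL1 (z) (x) (v)).
rewrite /circA ?(sDl, sDr, pDl, pDr) ?(scD ha, scN ha, scZ ha, scD hb, scN hb, scZ hb, scD hc, scN hc, scZ hc) in e70.
have e71 := congr1 b (hAL3 (x) (z) (v)).
rewrite /circA ?(sDl, sDr, pDl, pDr) ?(scD ha, scN ha, scZ ha, scD hb, scN hb, scZ hb, scD hc, scN hc, scZ hc) in e71.
have e72 := congr1 b (hAL3 (z) (x) (v)).
rewrite /circA ?(sDl, sDr, pDl, pDr) ?(scD ha, scN ha, scZ ha, scD hb, scN hb, scZ hb, scD hc, scN hc, scZ hc) in e72.
have e73 := congr1 b (hAL3 (v) (x) (z)).
rewrite /circA ?(sDl, sDr, pDl, pDr) ?(scD ha, scN ha, scZ ha, scD hb, scN hb, scZ hb, scD hc, scN hc, scZ hc) in e73.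
have e74 := congr1 b (hAL4 (x) (z) (v)).
rewrite /circA ?(sDl, sDr, pDl, pDr) ?(scD ha, scN ha, scZ ha, scD hb, scN hb, scZ hb, scD hc, scN hc, scZ hc) in e74.
have e75 := congr1 b (hAL4 (x) (v) (z)).
rewrite /circA ?(sDl, sDr, pDl, pDr) ?(scD ha, scN ha, scZ ha, scD hb, scN hb, scZ hb, scD hc, scN hc, scZ hc) in e75.
have e76 := congr1 b (hAN2 (x) (z) (v)).
rewrite /circA ?(sDl, sDr, pDl, pDr) ?(scD ha, scN ha, scZ ha, scD hb, scN hb, scZ hb, scD hc, scN hc, scZ hc) in e76.
have e77 := congr1 b (hAN2 (x) (v) (z)).
rewrite /circA ?(sDl, sDr, pDl, pDr) ?(scD ha, scN ha, scZ ha, scD hb, scN hb, scZ hb, scD hc, scN hc, scZ hc) in e77.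
have e78 := congr1 b (hAN3 (x) (v) (z)).
rewrite /circA ?(sDl, sDr, pDl, pDr) ?(scD ha, scN ha, scZ ha, scD hb, scN hb, scZ hb, scD hc, scN hc, scZ hc) in e78.
have e79 := congr1 c (hAL1 (x) (y) (v)).
rewrite /circA ?(sDl, sDr, pDl, pDr) ?(scD ha, scN ha, scZ ha, scD hb, scN hb, scZ hb, scD hc, scN hc, scZ hc) in e79.
have e80 := congr1 c (hAL1 (y) (x) (v)).
rewrite /circA ?(sDl, sDr, pDl, pDr) ?(scD ha, scN ha, scZ ha, scD hb, scN hb, scZ hb, scD hc, scN hc, scZ hc) in e80.
have e81 := congr1 c (hAL3 (x) (y) (v)).
rewrite /circA ?(sDl, sDr, pDl, pDr) ?(scD ha, scN ha, scZ ha, scD hb, scN hb, scZ hb, scD hc, scN hc, scZ hc) in e81.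
have e82 := congr1 c (hAL3 (y) (x) (v)).
rewrite /circA ?(sDl, sDr, pDl, pDr) ?(scD ha, scN ha, scZ ha, scD hb, scN hb, scZ hb, scD hc, scN hc, scZ hc) in e82.
have e83 := congr1 c (hAL4 (x) (y) (v)).
rewrite /circA ?(sDl, sDr, pDl, pDr) ?(scD ha, scN ha, scZ ha, scD hb, scN hb, scZ hb, scD hc, scN hc, scZ hc) in e83.
have e84 := congr1 c (hAN2 (x) (y) (v)).
rewrite /circA ?(sDl, sDr, pDl, pDr) ?(scD ha, scN ha, scZ ha, scD hb, scN hb, scZ hb, scD hc, scN hc, scZ hc) in e84.
rewrite /circA ?(sDl, sDr, pDl, pDr) ?(scD ha, scN ha, scZ ha, scD hb, scN hb, scZ hb, scD hc, scN hc, scZ hc).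
apply: (fin (comb (-(1%:R)) (comb (1%:R) (comb (-(1%:R)) (comb (1%:R) (comb (1%:R) (comb (-(1%:R)) (comb (1%:R) (comb (-(1%:R)) (comb (1%:R) (comb (2%:R) (comb (-(1%:R)) (comb (-(1%:R)) (comb (1%:R) (comb (-(1%:R)) (comb (-(1%:R)) (comb (-(1%:R)) (comb (1%:R) (comb (-(1%:R)) (comb (1%:R) (comb (-(1%:R)) (comb (1%:R) (comb (1%:R) (comb (-(2%:R)) (comb (1%:R) (comb (1%:R) (comb (-(1%:R)) (comb (1%:R) (comb (1%:R) (comb (1%:R) (comb (1%:R) (comb (1%:R) (comb (-(1%:R)) (erefl (0:K)) e53) e54) e55) e56) e57) e58) e59) e60) e61) e62) e63) e64) e65) e66) e67) e68) e69) e70) e71) e72) e73) e74) e75) e76) e77) e78) e79) e80) e81) e82) e83) e84)); ring.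
Qed.

End Back.

Section Fwd.
Hypothesis hC : dbl_compatible_Leibniz (circ1 s p) (circ2 s p).
Lemma fwdAN1 : AN1 s p.
Proof.
have [_ _ hCP] := hC.
move=> x y z; apply: sep => c hc.
have e85 := congr1 c (hAL1 (y) (x) (z)).
rewrite /circA ?(sDl, sDr, pDl, pDr) ?(scD hc, scN hc, scZ hc) in e85.
have e86 := congr1 c (hAL2 (y) (x) (z)).
rewrite /circA ?(sDl, sDr, pDl, pDr) ?(scD hc, scN hc, scZ hc) in e86.
have e87 := congr1 c (hAL3 (x) (y) (z)).
rewrite /circA ?(sDl, sDr, pDl, pDr) ?(scD hc, scN hc, scZ hc) in e87.
have e88 := congr1 c (hAL3 (y) (x) (z)).
rewrite /circA ?(sDl, sDr, pDl, pDr) ?(scD hc, scN hc, scZ hc) in e88.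
have e89 := congr1 c (hAL4 (x) (y) (z)).
rewrite /circA ?(sDl, sDr, pDl, pDr) ?(scD hc, scN hc, scZ hc) in e89.
have e90 := (fun u w (t : A) => congr1 (fun X => X.2 t) (hCP (u, fun _ => 0) (w, fun _ => 0) (u, c) (@scalar0 _ A) (@scalar0 _ A) hc)) (x) (y) (z).
rewrite /circ1 /circ2 /dadd /dopp /dzero /dualL /dualR /= in e90.
rewrite /circA ?(sDl, sDr, pDl, pDr) ?(scD hc, scN hc, scZ hc) in e90.
have e91 := (fun u w (t : A) => congr1 (fun X => X.2 t) (hCP (u, fun _ => 0) (w, fun _ => 0) (u, c) (@scalar0 _ A) (@scalar0 _ A) hc)) (x) (z) (y).
rewrite /circ1 /circ2 /dadd /dopp /dzero /dualL /dualR /= in e91.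
rewrite /circA ?(sDl, sDr, pDl, pDr) ?(scD hc, scN hc, scZ hc) in e91.
have e92 := (fun u w (t : A) => congr1 (fun X => X.2 t) (hCP (u, fun _ => 0) (w, fun _ => 0) (u, c) (@scalar0 _ A) (@scalar0 _ A) hc)) (y) (z) (x).
rewrite /circ1 /circ2 /dadd /dopp /dzero /dualL /dualR /= in e92.
rewrite /circA ?(sDl, sDr, pDl, pDr) ?(scD hc, scN hc, scZ hc) in e92.
have e93 := (fun u w (t : A) => congr1 (fun X => X.2 t) (hCP (u, fun _ => 0) (u, c) (w, fun _ => 0) (@scalar0 _ A) hc (@scalar0 _ A))) (x) (z) (y).
rewrite /circ1 /circ2 /dadd /dopp /dzero /dualL /dualR /= in e93.
rewrite /circA ?(sDl, sDr, pDl, pDr) ?(scD hc, scN hc, scZ hc) in e93.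
have e94 := (fun u w (t : A) => congr1 (fun X => X.2 t) (hCP (u, fun _ => 0) (u, c) (w, fun _ => 0) (@scalar0 _ A) hc (@scalar0 _ A))) (y) (z) (x).
rewrite /circ1 /circ2 /dadd /dopp /dzero /dualL /dualR /= in e94.
rewrite /circA ?(sDl, sDr, pDl, pDr) ?(scD hc, scN hc, scZ hc) in e94.
rewrite /circA ?(sDl, sDr, pDl, pDr) ?(scD hc, scN hc, scZ hc).
apply: (fin (comb (-(1%:R)) (comb (1%:R) (comb (-(1%:R)) (comb (1%:R) (comb (-(1%:R)) (comb (-(2%:R)) (comb (-(1%:R)) (comb (1%:R) (comb (1%:R) (comb (3%:R) (erefl (0:K)) e85) e86) e87) e88) e89) e90) e91) e92) e93) e94)); ring.
Qed.

Lemma fwdAN2 : AN2 s p.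
Proof.
have [_ _ hCP] := hC.
move=> x y z; apply: sep => c hc.
have e95 := congr1 c (hAL1 (x) (y) (z)).
rewrite /circA ?(sDl, sDr, pDl, pDr) ?(scD hc, scN hc, scZ hc) in e95.
have e96 := congr1 c (hAL1 (y) (x) (z)).
rewrite /circA ?(sDl, sDr, pDl, pDr) ?(scD hc, scN hc, scZ hc) in e96.
have e97 := congr1 c (hAL3 (x) (y) (z)).
rewrite /circA ?(sDl, sDr, pDl, pDr) ?(scD hc, scN hc, scZ hc) in e97.
have e98 := congr1 c (hAL3 (y) (x) (z)).
rewrite /circA ?(sDl, sDr, pDl, pDr) ?(scD hc, scN hc, scZ hc) in e98.
have e99 := congr1 c (hAL4 (x) (y) (z)).
rewrite /circA ?(sDl, sDr, pDl, pDr) ?(scD hc, scN hc, scZ hc) in e99.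
have e100 := (fun u w (t : A) => congr1 (fun X => X.2 t) (hCP (u, fun _ => 0) (w, fun _ => 0) (u, c) (@scalar0 _ A) (@scalar0 _ A) hc)) (x) (y) (z).
rewrite /circ1 /circ2 /dadd /dopp /dzero /dualL /dualR /= in e100.
rewrite /circA ?(sDl, sDr, pDl, pDr) ?(scD hc, scN hc, scZ hc) in e100.
rewrite /circA ?(sDl, sDr, pDl, pDr) ?(scD hc, scN hc, scZ hc).
apply: (fin (comb (-(1%:R)) (comb (1%:R) (comb (-(1%:R)) (comb (1%:R) (comb (1%:R) (comb (-(1%:R)) (erefl (0:K)) e95) e96) e97) e98) e99) e100)); ring.
Qed.

Lemma fwdAN3 : AN3 s p.
Proof.
have [_ _ hCP] := hC.
move=> x y z; apply: sep => c hc.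
have e101 := congr1 c (hAL1 (y) (x) (z)).
rewrite /circA ?(sDl, sDr, pDl, pDr) ?(scD hc, scN hc, scZ hc) in e101.
have e102 := congr1 c (hAL3 (x) (y) (z)).
rewrite /circA ?(sDl, sDr, pDl, pDr) ?(scD hc, scN hc, scZ hc) in e102.
have e103 := congr1 c (hAL4 (x) (y) (z)).
rewrite /circA ?(sDl, sDr, pDl, pDr) ?(scD hc, scN hc, scZ hc) in e103.
have e104 := (fun u w (t : A) => congr1 (fun X => X.2 t) (hCP (u, fun _ => 0) (w, fun _ => 0) (u, c) (@scalar0 _ A) (@scalar0 _ A) hc)) (x) (y) (z).
rewrite /circ1 /circ2 /dadd /dopp /dzero /dualL /dualR /= in e104.
rewrite /circA ?(sDl, sDr, pDl, pDr) ?(scD hc, scN hc, scZ hc) in e104.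
have e105 := (fun u w (t : A) => congr1 (fun X => X.2 t) (hCP (u, fun _ => 0) (w, fun _ => 0) (u, c) (@scalar0 _ A) (@scalar0 _ A) hc)) (x) (z) (y).
rewrite /circ1 /circ2 /dadd /dopp /dzero /dualL /dualR /= in e105.
rewrite /circA ?(sDl, sDr, pDl, pDr) ?(scD hc, scN hc, scZ hc) in e105.
have e106 := (fun u w (t : A) => congr1 (fun X => X.2 t) (hCP (u, fun _ => 0) (u, c) (w, fun _ => 0) (@scalar0 _ A) hc (@scalar0 _ A))) (x) (z) (y).
rewrite /circ1 /circ2 /dadd /dopp /dzero /dualL /dualR /= in e106.
rewrite /circA ?(sDl, sDr, pDl, pDr) ?(scD hc, scN hc, scZ hc) in e106.
rewrite /circA ?(sDl, sDr, pDl, pDr) ?(scD hc, scN hc, scZ hc).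
apply: (fin (comb (1%:R) (comb (1%:R) (comb (-(1%:R)) (comb (-(1%:R)) (comb (1%:R) (comb (1%:R) (erefl (0:K)) e101) e102) e103) e104) e105) e106)); ring.
Qed.

End Fwd.
End Main.

Theorem proposition3p8 (K : fieldType) (hK : [pchar K] =i pred0)
  (A : vectType K) (succ prec : A -> A -> A)
  (hA : anti_pre_Leibniz succ prec) :
  dbl_compatible_Leibniz (circ1 succ prec) (circ2 succ prec) <->
  admissible_Novikov_dialgebra succ prec.
Proof.
have [[sl sr] [[pl pr] [h1 h2 h3 h4]]] := hA.
split.
- move=> hC; split; first by split.
  split; first by split.
  split; first by split.
  split; by [apply: fwdAN1 | apply: fwdAN2 | apply: fwdAN3].
- move=> [_ [_ [_ [n1 n2 n3]]]].
  split => X Y Z hX hY hZ; [apply: leib1 | apply: leib2 | apply: compat] => //.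
Qed.
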